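(* Consider an agent-dependent SDP PEP for distributed optimization in which all $n\ge2$ agents are equivalent, restricted to fully symmetric solutions $F^s=[(f^A)^T\dots(f^A)^T]$, $G^s$ with all diagonal blocks $G^A$ and all off-diagonal blocks $G^C$, and let $G^T=\frac1n(G^A+(n-1)G^C)$. Then every scale-invariant Gram-representable expression can be written, with coefficients independent of $n$, as a linear expression in $f^A$, $G^A$ and $G^T$. Specifically, for local variables $x_i=P_i\xi_x$, $y_i=P_i\xi_y$ and function values $f_i(x_i)=\xi_{f(x)}^Tf_i$: $\frac1n\sum_{i=1}^nf_i(x_i)=\xi_{f(x)}^Tf^A$, $\frac1n\sum_{i=1}^nx_i^Ty_i=\xi_x^TG^A\xi_y$, and $\frac1{n^2}\sum_{i=1}^n\sum_{j=1}^nx_i^Ty_j=\xi_x^TG^T\xi_y$.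
   Context: In the agent-dependent SDP PEP, each agent $i$ holds $p$ vector variables as the columns of $P_i\in\mathbb{R}^{d\times p}$ (same order for all agents; points common to all agents such as $x^*$ are copied into every $P_i$), and $q$ function values in $f_i\in\mathbb{R}^q$; the variables are $F=[f_1^T\dots f_n^T]$ and $G=P^TP\succeq0$, $P=[P_1\dots P_n]$, $G_{ij}=P_i^TP_j$. A coefficient vector $\xi_x\in\mathbb{R}^p$ satisfies $P_i\xi_x=x_i$ for all $i$, and $\xi_{f(x)}\in\mathbb{R}^q$ satisfies $\xi_{f(x)}^Tf_i=f_i(x_i)$ for all $i$. All agents being equivalent means swapping the blocks of any two agents in any feasible solution gives a feasible solution with equal objective; in that case the PEP may be restricted to fully symmetric solutions. A Gram-representable expression $h$ (linear in $(F,G)$) is scale-invariant if $h=\sum_jc_jh_j$ with coefficients $c_j$ independent of $n$ and each $h_j$ of one of the forms $\frac1n\sum_if_i(x_i)$, $\frac1n\sum_ix_i^Ty_i$, $\frac1{n^2}\sum_i\sum_jx_i^Ty_j$ (including $x=y$). *)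

(* Defs.v *)
From mathcomp Require Import all_boot all_order all_algebra.
Set Implicit Arguments. Unset Strict Implicit. Unset Printing Implicit Defensive.
Import Order.TTheory GRing.Theory Num.Theory.
Local Open Scope ring_scope.

(* Agent-dependent PEP: agent i (i : 'I_n) holds P i : 'M_(d,p) (columns are
   its p vector variables) and f i : 'cV_q (its q function values). *)
Definition gram_block (R : ringType) (n d p : nat)
  (P : 'I_n -> 'M[R]_(d, p)) (i j : 'I_n) : 'M[R]_p := (P i)^T *m P j.

Definition GTmat (R : fieldType) (n p : nat) (GA GC : 'M[R]_p) : 'M[R]_p :=
  (n%:R)^-1 *: (GA + (n.-1)%:R *: GC).

(* Main.v *)
Require Import Defs.
From mathcomp Require Import all_boot all_order all_algebra.
Import Order.TTheory GRing.Theory Num.Theory.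
Local Open Scope ring_scope.

(* Scalars x_i^T y_i, f_i(x_i) etc. are represented as 1x1 matrices. *)
Theorem lemma4 (R : realFieldType) (n d p q : nat) (hn : (2 <= n)%N)
  (P : 'I_n -> 'M[R]_(d, p)) (f : 'I_n -> 'cV[R]_q)
  (fA : 'cV[R]_q) (GA GC : 'M[R]_p)
  (hf : forall i, f i = fA)
  (hdiag : forall i, gram_block P i i = GA)
  (hoff : forall i j, i != j -> gram_block P i j = GC)
  (xi_x xi_y : 'cV[R]_p) (xi_fx : 'cV[R]_q) :
  let x := fun i => P i *m xi_x in
  let y := fun i => P i *m xi_y in
  let fx := fun i => xi_fx^T *m f i in
  [/\ (n%:R)^-1 *: (\sum_(i < n) fx i) = xi_fx^T *m fA,
      (n%:R)^-1 *: (\sum_(i < n) (x i)^T *m y i) = xi_x^T *m GA *m xi_y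
    & (n%:R ^+ 2)^-1 *: (\sum_(i < n) \sum_(j < n) (x i)^T *m y j)
        = xi_x^T *m GTmat n GA GC *m xi_y].
Proof.
move=> x y fx.
have n0 : (n%:R : R) != 0 by rewrite pnatr_eq0 -lt0n; apply: leq_trans hn.
have key : forall i j, (x i)^T *m y j = xi_x^T *m gram_block P i j *m xi_y.
  by move=> i j; rewrite /x /y trmx_mul /gram_block !mulmxA.
split.
- under eq_bigr => i _ do rewrite /fx hf.
  by rewrite sumr_const card_ord -scaler_nat scalerA mulVf // scale1r.
- under eq_bigr => i _ do rewrite key hdiag.
  by rewrite sumr_const card_ord -scaler_nat scalerA mulVf // scale1r.
- have inner : forall i : 'I_n, \sum_(j < n) (x i)^T *m y j =
      xi_x^T *m GA *m xi_y + (n.-1)%:R *: (xi_x^T *m GC *m xi_y).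
    move=> i; rewrite (bigD1 i) //= key hdiag; congr (_ + _).
    under eq_bigr => j hj do rewrite key hoff 1?eq_sym //.
    rewrite sumr_const -scaler_nat; congr (_ *: _); congr (_%:R).
    by rewrite cardC1 card_ord.
  under eq_bigr => i _ do rewrite inner.
  rewrite sumr_const card_ord -scaler_nat scalerA expr2 invfM // -mulrA mulVf // mulr1.
  by rewrite /GTmat -scalemxAr -scalemxAl mulmxDr mulmxDl -!scalemxAr -!scalemxAl.
Qed.
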